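(* Let $\mathcal{K}^{\langle\infty\rangle}$ be a planar unbounded simple nested fractal whose number of essential fixed points is $k=4$. Then $\mathcal{K}^{\langle\infty\rangle}$ has the good labelling property.
   Context: Setting: $L>1$, $N\ge2$, $\nu_1=0,\dots,\nu_N\in\mathbb{R}^2$, $\Psi_i(x)=x/L+\nu_i$, and $\mathcal{K}^{\langle 0\rangle}=\bigcup_i\Psi_i(\mathcal{K}^{\langle 0\rangle})$ is a planar simple nested fractal (essential fixed points $V_0^{\langle0\rangle}$: fixed points $x$ for which there are another fixed point $y$ and $\Psi_i\ne\Psi_j$ with $\Psi_i(x)=\Psi_j(y)$; open set condition, nesting, symmetry with respect to perpendicular bisectors of pairs of essential fixed points, connectivity); $k=\#V_0^{\langle0\rangle}$, and $V_0^{\langle0\rangle}$ spans a regular $k$-gon. $\mathcal{K}^{\langle M\rangle}=L^M\mathcal{K}^{\langle 0\rangle}$, $\mathcal{K}^{\langle\infty\rangle}=\bigcup_{M\ge0}\mathcal{K}^{\langle M\rangle}$. An $M$-complex is $\Delta_M=\mathcal{K}^{\langle M\rangle}+\nu_{\Delta_M}$ with $\nu_{\Delta_M}=\sum_{j=M+1}^{J}L^j\nu_{i_j}$ ($J\ge M+1$), vertex set $V(\Delta_M)=L^MV_0^{\langle0\rangle}+\nu_{\Delta_M}$; $V_M^{\langle M\rangle}=L^MV_0^{\langle0\rangle}$ and $V_M^{\langle\infty\rangle}$ is the union of all $V(\Delta_M)$. With $\mathcal{A}$ an alphabet of $k$ symbols and $\mathcal{R}_M$ the $k$ rotations about the barycenter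 of $\mathcal{K}^{\langle M\rangle}$ preserving $V_M^{\langle M\rangle}$, a good labelling function of order $M$ is $\ell_M:V_M^{\langle\infty\rangle}\to\mathcal{A}$, bijective on $V_M^{\langle M\rangle}$, such that for each $M$-complex $\Delta_M=\mathcal{K}^{\langle M\rangle}+\nu_{\Delta_M}$ there is $R_{\Delta_M}\in\mathcal{R}_M$ with $\ell_M(v)=\ell_M(R_{\Delta_M}(v-\nu_{\Delta_M}))$, $v\in V(\Delta_M)$. The good labelling property means that a good labelling function of some order $M\in\mathbb{Z}$ exists. *)

(* Defs.v *)
From Stdlib Require Import Reals List ZArith Relations.
Open Scope R_scope.

Definition pt := (R * R)%type.
Definition padd (p q : pt) : pt := (fst p + fst q, snd p + snd q).
Definition psub (p q : pt) : pt := (fst p - fst q, snd p - snd q).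
Definition pscale (c : R) (p : pt) : pt := (c * fst p, c * snd p).
Definition dot (p q : pt) : R := fst p * fst q + snd p * snd q.
Definition dist (p q : pt) : R := sqrt (dot (psub p q) (psub p q)).

Definition img (f : pt -> pt) (S : pt -> Prop) : pt -> Prop :=
  fun z => exists x, S x /\ z = f x.

Definition is_open (U : pt -> Prop) : Prop :=
  forall x, U x -> exists e, 0 < e /\ forall y, dist x y < e -> U y.
Definition is_closed (S : pt -> Prop) : Prop :=
  forall x, (forall e, 0 < e -> exists y, S y /\ dist x y < e) -> S x.
Definition is_bounded (S : pt -> Prop) : Prop :=
  exists B, forall x, S x -> dist (0, 0) x <= B.
Definition nonempty (S : pt -> Prop) : Prop := exists x, S x.

Definition set_card (S : pt -> Prop) (k : nat) : Prop :=
  exists l : list pt, NoDup l /\ length l = k /\ forall x, S x <-> In x l.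

(* the similitudes Psi_i(x) = x/L + nu_i, i = 0..N-1 (index 0 plays the role of 1) *)
Definition Psi (L : R) (nu : nat -> pt) (i : nat) (x : pt) : pt :=
  padd (pscale (/ L) x) (nu i).

Definition fixed_pt (L : R) (N : nat) (nu : nat -> pt) (x : pt) : Prop :=
  exists i, (i < N)%nat /\ Psi L nu i x = x.

Definition V0 (L : R) (N : nat) (nu : nat -> pt) (x : pt) : Prop :=
  fixed_pt L N nu x /\
  exists y i j, fixed_pt L N nu y /\ (i < N)%nat /\ (j < N)%nat /\
    Psi L nu i <> Psi L nu j /\ Psi L nu i x = Psi L nu j y.

Definition attractor (L : R) (N : nat) (nu : nat -> pt) (K : pt -> Prop) : Prop :=
  nonempty K /\ is_closed K /\ is_bounded K /\
  forall z, K z <-> exists i, (i < N)%nat /\ img (Psi L nu i) K z.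

Definition OSC (L : R) (N : nat) (nu : nat -> pt) : Prop :=
  exists U, is_open U /\ is_bounded U /\ nonempty U /\
    (forall i, (i < N)%nat -> forall z, img (Psi L nu i) U z -> U z) /\
    (forall i j, (i < N)%nat -> (j < N)%nat -> i <> j ->
       forall z, ~ (img (Psi L nu i) U z /\ img (Psi L nu j) U z)).

Definition nesting (L : R) (N : nat) (nu : nat -> pt) (K : pt -> Prop) : Prop :=
  forall i j, (i < N)%nat -> (j < N)%nat -> i <> j ->
    forall z, (img (Psi L nu i) K z /\ img (Psi L nu j) K z) <->
              (img (Psi L nu i) (V0 L N nu) z /\ img (Psi L nu j) (V0 L N nu) z).

Definition refl_bisector (x y z : pt) : pt :=
  let d := psub y x in
  let m := pscale (/ 2) (padd x y) in
  psub z (pscale (2 * dot (psub z m) d / dot d d) d).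

Definition symmetry (L : R) (N : nat) (nu : nat -> pt) : Prop :=
  forall i x y, (i < N)%nat -> V0 L N nu x -> V0 L N nu y -> x <> y ->
    exists j, (j < N)%nat /\
      forall z, img (refl_bisector x y) (img (Psi L nu i) (V0 L N nu)) z <->
                img (Psi L nu j) (V0 L N nu) z.

Definition edge_m1 (L : R) (N : nat) (nu : nat -> pt) (x y : pt) : Prop :=
  exists i, (i < N)%nat /\ img (Psi L nu i) (V0 L N nu) x /\
                           img (Psi L nu i) (V0 L N nu) y.
Definition Vm1 (L : R) (N : nat) (nu : nat -> pt) (x : pt) : Prop :=
  exists i, (i < N)%nat /\ img (Psi L nu i) (V0 L N nu) x.
Definition connectivity (L : R) (N : nat) (nu : nat -> pt) : Prop :=
  forall x y, Vm1 L N nu x -> Vm1 L N nu y ->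
    clos_refl_trans pt (edge_m1 L N nu) x y.

Definition simple_nested_fractal (L : R) (N : nat) (nu : nat -> pt)
    (K : pt -> Prop) : Prop :=
  1 < L /\ (2 <= N)%nat /\ nu 0%nat = (0, 0) /\
  attractor L N nu K /\ OSC L N nu /\ nesting L N nu K /\
  symmetry L N nu /\ connectivity L N nu.

(* admissible words (i_{M+1}, ..., i_J), J >= M+1 *)
Definition valid_word (N : nat) (w : list nat) : Prop :=
  w <> nil /\ forall i, In i w -> (i < N)%nat.

Fixpoint word_shift (L : R) (nu : nat -> pt) (e : Z) (w : list nat) : pt :=
  match w with
  | nil => (0, 0)
  | i :: w' => padd (pscale (powerRZ L e) (nu i)) (word_shift L nu (e + 1)%Z w')
  end.

(* nu_{Delta_M} = sum_{j=M+1}^J L^j nu_{i_j} *)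
Definition complex_shift (L : R) (nu : nat -> pt) (M : Z) (w : list nat) : pt :=
  word_shift L nu (M + 1)%Z w.

Definition VMM (L : R) (N : nat) (nu : nat -> pt) (M : Z) (x : pt) : Prop :=
  exists v, V0 L N nu v /\ x = pscale (powerRZ L M) v.

Definition Vcomplex (L : R) (N : nat) (nu : nat -> pt) (M : Z) (w : list nat)
    (x : pt) : Prop :=
  exists v, VMM L N nu M v /\ x = padd v (complex_shift L nu M w).

Definition VMinf (L : R) (N : nat) (nu : nat -> pt) (M : Z) (x : pt) : Prop :=
  exists w, valid_word N w /\ Vcomplex L N nu M w x.

Definition rot (th : R) (p : pt) : pt :=
  (cos th * fst p - sin th * snd p, sin th * fst p + cos th * snd p).
Definition rotation (c : pt) (th : R) (x : pt) : pt := padd c (rot th (psub x c)).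

(* R_M: the rotations of the plane preserving V_M^<M> (necessarily about the
   barycenter, k of them) *)
Definition in_RM (L : R) (N : nat) (nu : nat -> pt) (M : Z) (f : pt -> pt) : Prop :=
  (exists c th, forall x, f x = rotation c th x) /\
  (forall x, VMM L N nu M x -> VMM L N nu M (f x)) /\
  (forall y, VMM L N nu M y -> exists x, VMM L N nu M x /\ f x = y).

Definition good_labelling (L : R) (N : nat) (nu : nat -> pt) (k : nat) (M : Z)
    (lab : pt -> nat) : Prop :=
  (forall x, VMinf L N nu M x -> (lab x < k)%nat) /\
  (forall x y, VMM L N nu M x -> VMM L N nu M y -> lab x = lab y -> x = y) /\
  (forall a, (a < k)%nat -> exists x, VMM L N nu M x /\ lab x = a) /\
  (forall w, valid_word N w ->
     exists f, in_RM L N nu M f /\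
       forall v, Vcomplex L N nu M w v ->
         lab v = lab (f (psub v (complex_shift L nu M w)))).

Definition good_labelling_property (L : R) (N : nat) (nu : nat -> pt) : Prop :=
  exists k, set_card (V0 L N nu) k /\
    exists (M : Z) (lab : pt -> nat), good_labelling L N nu k M lab.

(* Main.v *)
Require Import Defs.
From Stdlib Require Import Reals List ZArith Relations Lra Lia Psatz Classical ClassicalEpsilon Permutation.
Open Scope R_scope.

Lemma pair_neq (a1 a2 b1 b2 : R) : (a1,a2) <> (b1,b2) -> a1 <> b1 \/ a2 <> b2.
Proof. intros H. destruct (Req_dec a1 b1); destruct (Req_dec a2 b2); subst; auto. Qed.

Lemma sq_pos_neq (u1 u2 : R) : u1 <> 0 \/ u2 <> 0 -> 0 < u1*u1 + u2*u2.
Proof. intros [H|H]; [assert (0 < u1*u1) by (apply Rsqr_pos_lt; auto) | assert (0 < u2*u2) by (apply Rsqr_pos_lt; auto)];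
  assert (0 <= u1*u1) by nra; assert (0 <= u2*u2) by nra; lra. Qed.

Lemma L3 (a1 a2 b1 b2 c1 c2 o1 o2 r : R) :
  (a1-o1)^2+(a2-o2)^2 = r -> (b1-o1)^2+(b2-o2)^2 = r -> (c1-o1)^2+(c2-o2)^2 = r ->
  (b1-a1)*(c2-a2) - (b2-a2)*(c1-a1) = 0 ->
  (a1,a2) <> (b1,b2) -> (a1,a2) <> (c1,c2) -> (b1,b2) <> (c1,c2) -> False.
Proof.
  intros Ha Hb Hc Hcr Hab Hac Hbc.
  set (u1 := b1 - a1). set (u2 := b2 - a2). set (w1 := c1 - a1). set (w2 := c2 - a2).
  assert (Hu : u1 <> 0 \/ u2 <> 0).
  { apply pair_neq in Hab. unfold u1, u2. destruct Hab; [left|right]; lra. }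
  pose proof (sq_pos_neq u1 u2 Hu) as HE.
  set (E := u1*u1+u2*u2) in *.
  set (lam := (w1*u1 + w2*u2)/E).
  fold u1 u2 w1 w2 in Hcr.
  assert (Hw1 : w1 = lam * u1).
  { assert (E*w1 = (w1*u1+w2*u2)*u1).
    { apply Rminus_diag_uniq. unfold E. replace ((u1 * u1 + u2 * u2) * w1 - (w1 * u1 + w2 * u2) * u1) with (- u2 * (u1*w2 - u2*w1)) by ring.
      rewrite Hcr. ring. }
    unfold lam. apply Rmult_eq_reg_l with E; [|lra]. rewrite H. field. lra. }
  assert (Hw2 : w2 = lam * u2).
  { assert (E*w2 = (w1*u1+w2*u2)*u2).
    { apply Rminus_diag_uniq. unfold E. replace ((u1 * u1 + u2 * u2) * w2 - (w1 * u1 + w2 * u2) * u2) with (u1 * (u1*w2 - u2*w1)) by ring.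
      rewrite Hcr. ring. }
    unfold lam. apply Rmult_eq_reg_l with E; [|lra]. rewrite H. field. lra. }
  assert (H1 : 2*((a1-o1)*u1 + (a2-o2)*u2) + E = 0).
  { unfold E, u1, u2. nra. }
  assert (H2 : 2*((a1-o1)*w1 + (a2-o2)*w2) + (w1*w1+w2*w2) = 0).
  { unfold w1, w2. nra. }
  rewrite Hw1, Hw2 in H2.
  assert (H3 : lam * (lam - 1) * E = 0).
  { replace (lam*(lam-1)*E) with ((2*((a1-o1)*(lam*u1) + (a2-o2)*(lam*u2)) + (lam*u1*(lam*u1) + lam*u2*(lam*u2))) - lam*(2*((a1-o1)*u1 + (a2-o2)*u2) + E)) by (unfold E; ring).
    rewrite H2, H1; ring. }
  assert (Hl : lam = 0 \/ lam = 1).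
  { apply Rmult_integral in H3. destruct H3 as [H3|H3]; [|lra].
    apply Rmult_integral in H3. destruct H3; [left|right]; lra. }
  destruct Hl as [Hl|Hl]; rewrite Hl in Hw1, Hw2; unfold w1, w2, u1, u2 in *.
  - apply Hac. f_equal; lra.
  - apply Hbc. f_equal; lra.
Qed.

Lemma L3b (a1 a2 b1 b2 c1 c2 o1 o2 p1 p2 r s : R) :
  (a1-o1)^2+(a2-o2)^2 = r -> (b1-o1)^2+(b2-o2)^2 = r -> (c1-o1)^2+(c2-o2)^2 = r ->
  (a1-p1)^2+(a2-p2)^2 = s -> (b1-p1)^2+(b2-p2)^2 = s -> (c1-p1)^2+(c2-p2)^2 = s ->
  (o1,o2) <> (p1,p2) ->
  (a1,a2) <> (b1,b2) -> (a1,a2) <> (c1,c2) -> (b1,b2) <> (c1,c2) -> False.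
Proof.
  intros Ha Hb Hc Ha' Hb' Hc' Hop Hab Hac Hbc.
  apply (L3 a1 a2 b1 b2 c1 c2 o1 o2 r); auto.
  set (e1 := p1 - o1). set (e2 := p2 - o2).
  assert (Hu : (b1-a1)*e1 + (b2-a2)*e2 = 0) by (unfold e1, e2; nra).
  assert (Hw : (c1-a1)*e1 + (c2-a2)*e2 = 0) by (unfold e1, e2; nra).
  set (cr := (b1 - a1) * (c2 - a2) - (b2 - a2) * (c1 - a1)).
  assert (H1 : cr * e1 = 0).
  { unfold cr. replace ((b1 - a1) * (c2 - a2) - (b2 - a2) * (c1 - a1)) with cr by reflexivity.
    replace (cr*e1) with (((b1-a1)*e1 + (b2-a2)*e2)*(c2-a2) - ((c1-a1)*e1 + (c2-a2)*e2)*(b2-a2)) by (unfold cr; ring).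
    rewrite Hu, Hw; ring. }
  assert (H2 : cr * e2 = 0).
  { replace (cr*e2) with (-(c1-a1)*((b1-a1)*e1 + (b2-a2)*e2) + (b1-a1)*((c1-a1)*e1 + (c2-a2)*e2)) by (unfold cr; ring).
    rewrite Hu, Hw; ring. }
  apply pair_neq in Hop. destruct Hop as [Hop|Hop].
  - apply Rmult_integral in H1. destruct H1; auto. unfold e1 in *. lra.
  - apply Rmult_integral in H2. destruct H2; auto. unfold e2 in *. lra.
Qed.

Lemma four_pairs (a1 a2 b1 b2 c1 c2 d1 d2 : R) :
  a1+b1+c1+d1 = 0 -> a2+b2+c2+d2 = 0 ->
  a1*a1+a2*a2 = b1*b1+b2*b2 -> a1*a1+a2*a2 = c1*c1+c2*c2 -> a1*a1+a2*a2 = d1*d1+d2*d2 ->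
  (b1 = -a1 /\ b2 = -a2) \/ (c1 = -a1 /\ c2 = -a2) \/ (d1 = -a1 /\ d2 = -a2).
Proof.
  intros S1 S2 Hb Hc Hd.
  set (s1 := a1+b1). set (s2 := a2+b2).
  destruct (classic (s1 = 0 /\ s2 = 0)) as [[H1 H2]|Hs].
  { left. unfold s1, s2 in *. split; lra. }
  assert (Hs' : s1 <> 0 \/ s2 <> 0) by (apply not_and_or in Hs; auto).
  pose proof (sq_pos_neq s1 s2 Hs') as HE. set (E := s1*s1+s2*s2) in *.
  set (x1 := a1 - b1). set (x2 := a2 - b2). set (y1 := c1 - d1). set (y2 := c2 - d2).
  assert (Hx : x1*s1 + x2*s2 = 0) by (unfold x1,x2,s1,s2; nra).
  assert (Hy : y1*s1 + y2*s2 = 0).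
  { assert (s1 = -(c1+d1)) by (unfold s1; lra). assert (s2 = -(c2+d2)) by (unfold s2; lra).
    rewrite H, H0. unfold y1, y2. nra. }
  assert (Hxy : x1*x1+x2*x2 = y1*y1+y2*y2).
  { assert (Ha4 : 4*(a1*a1+a2*a2) = E + (x1*x1+x2*x2) + 2*(x1*s1+x2*s2)) by (unfold E, x1, x2, s1, s2; ring).
    assert (Hc4 : 4*(c1*c1+c2*c2) = E + (y1*y1+y2*y2) - 2*(y1*s1+y2*s2)).
    { assert (s1 = -(c1+d1)) by (unfold s1; lra). assert (s2 = -(c2+d2)) by (unfold s2; lra).
      unfold E. rewrite H, H0. unfold y1, y2. ring. }
    rewrite Hx in Ha4. rewrite Hy in Hc4. lra. }
  set (al := s1*x2 - s2*x1). set (be := s1*y2 - s2*y1).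
  assert (Ex1 : E*x1 = - al * s2).
  { apply Rminus_diag_uniq. replace (E*x1 - -al*s2) with (s1*(x1*s1+x2*s2)) by (unfold E, al; ring). rewrite Hx; ring. }
  assert (Ex2 : E*x2 = al * s1).
  { apply Rminus_diag_uniq. replace (E*x2 - al*s1) with (s2*(x1*s1+x2*s2)) by (unfold E, al; ring). rewrite Hx; ring. }
  assert (Ey1 : E*y1 = - be * s2).
  { apply Rminus_diag_uniq. replace (E*y1 - -be*s2) with (s1*(y1*s1+y2*s2)) by (unfold E, be; ring). rewrite Hy; ring. }
  assert (Ey2 : E*y2 = be * s1).
  { apply Rminus_diag_uniq. replace (E*y2 - be*s1) with (s2*(y1*s1+y2*s2)) by (unfold E, be; ring). rewrite Hy; ring. }
  assert (Hab : al*al = be*be).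
  { assert (E*(E*(x1*x1+x2*x2)) = E*(al*al)).
    { replace (E*(E*(x1*x1+x2*x2))) with ((E*x1)*(E*x1) + (E*x2)*(E*x2)) by ring.
      rewrite Ex1, Ex2. unfold E. ring. }
    assert (E*(E*(y1*y1+y2*y2)) = E*(be*be)).
    { replace (E*(E*(y1*y1+y2*y2))) with ((E*y1)*(E*y1) + (E*y2)*(E*y2)) by ring.
      rewrite Ey1, Ey2. unfold E. ring. }
    apply Rmult_eq_reg_l with E; [|lra]. rewrite <- H, <- H0, Hxy. reflexivity. }
  assert (Hpm : (al - be)*(al+be) = 0) by nra.
  apply Rmult_integral in Hpm. destruct Hpm as [Hp|Hp].
  - assert (x1 = y1) by (apply Rmult_eq_reg_l with E; [|lra]; rewrite Ex1, Ey1; replace be with al by lra; ring).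
    assert (x2 = y2) by (apply Rmult_eq_reg_l with E; [|lra]; rewrite Ex2, Ey2; replace be with al by lra; ring).
    right; right. unfold x1, x2, y1, y2 in *. split; lra.
  - assert (x1 = -y1) by (apply Rmult_eq_reg_l with E; [|lra]; rewrite Ex1; replace (E * - y1) with (-(E*y1)) by ring; rewrite Ey1; replace be with (-al) by lra; ring).
    assert (x2 = -y2) by (apply Rmult_eq_reg_l with E; [|lra]; rewrite Ex2; replace (E * - y2) with (-(E*y2)) by ring; rewrite Ey2; replace be with (-al) by lra; ring).
    right; left. unfold x1, x2, y1, y2 in *. split; lra.
Qed.

Lemma Psi_inj L nu i x y : L <> 0 -> Psi L nu i x = Psi L nu i y -> x = y.
Proof.
  unfold Psi, padd, pscale. destruct x as [x1 x2], y as [y1 y2]; simpl. intros HL H.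
  injection H; intros H2 H1.
  assert (/L <> 0) by (apply Rinv_neq_0_compat; auto).
  f_equal; apply Rmult_eq_reg_l with (/L); auto; lra.
Qed.

Lemma fixed_in_K L N nu K i x : 1 < L -> attractor L N nu K -> (i < N)%nat ->
  Psi L nu i x = x -> K x.
Proof.
  intros HL [[z Kz] [Hcl [Hb Hatt]]] Hi Hfix.
  set (f := Psi L nu i).
  assert (Hit : forall n, K (Nat.iter n f z)).
  { induction n; simpl; auto. apply Hatt. exists i; split; auto. exists (Nat.iter n f z); split; auto. }
  destruct x as [x1 x2]. destruct z as [z1 z2].
  unfold Psi, padd, pscale in Hfix. simpl in Hfix.
  destruct (nu i) as [n1 n2] eqn:Enu. injection Hfix; intros F2 F1.
  assert (Hd : forall n, Nat.iter n f (z1,z2) = (x1 + (/L)^n * (z1 - x1), x2 + (/L)^n * (z2 - x2))).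
  { induction n; simpl.
    - f_equal; ring.
    - rewrite IHn. unfold f, Psi, padd, pscale. rewrite Enu. simpl. f_equal.
      + replace n1 with (x1 - /L * x1) by lra. ring.
      + replace n2 with (x2 - /L * x2) by lra. ring. }
  apply Hcl. intros e He.
  set (D := sqrt ((z1-x1)^2 + (z2-x2)^2)).
  assert (HD : 0 <= D) by apply sqrt_pos.
  assert (HL1 : Rabs (/L) < 1).
  { rewrite Rabs_right. - apply (Rmult_lt_reg_l L); [lra|]. rewrite Rinv_r; lra.
    - left. apply Rinv_0_lt_compat. lra. }
  destruct (pow_lt_1_zero (/L) HL1 (e / (D+1))) as [n Hn].
  { apply Rdiv_lt_0_compat; lra. }
  specialize (Hn n (le_n n)).
  exists (Nat.iter n f (z1,z2)). split; auto.
  rewrite Hd. unfold Defs.dist, dot, psub. simpl.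
  set (k := (/L)^n) in *.
  assert (Hk : 0 <= k) by (unfold k; apply pow_le; left; apply Rinv_0_lt_compat; lra).
  rewrite Rabs_right in Hn by lra.
  replace ((x1 - (x1 + k * (z1 - x1))) * (x1 - (x1 + k * (z1 - x1))) +
     (x2 - (x2 + k * (z2 - x2))) * (x2 - (x2 + k * (z2 - x2)))) with ((k*k) * ((z1-x1)^2 + (z2-x2)^2)) by ring.
  rewrite sqrt_mult by (first [apply Rmult_le_pos; auto | apply Rplus_le_le_0_compat; apply pow2_ge_0]).

  rewrite sqrt_square by auto. fold D.
  assert (k * (D+1) < e).
  { apply (Rmult_lt_compat_r (D+1)) in Hn; [|lra]. unfold Rdiv in Hn. rewrite Rmult_assoc, Rinv_l in Hn; lra. }
  nra.
Qed.

Definition pt_eq_dec : forall p q : pt, {p = q} + {p <> q}.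
Proof. decide equality; apply Req_EM_T. Defined.

Definition reflH (h d z : pt) : pt := psub z (pscale (2 * dot (psub z h) d / dot d d) d).
Definition Dsq (a b : pt) : R := dot (psub a b) (psub a b).
Definition cross (a b : pt) : R := fst a * snd b - snd a * fst b.

Lemma refl_bisector_H x y z : refl_bisector x y z = reflH (pscale (/2) (padd x y)) (psub y x) z.
Proof. reflexivity. Qed.

Lemma dd_neq x y : x <> y -> dot (psub y x) (psub y x) <> 0.
Proof.
  destruct x as [x1 x2], y as [y1 y2]. unfold dot, psub; simpl. intros H.
  assert (H' : x1 <> y1 \/ x2 <> y2) by (apply pair_neq; auto).
  assert (y1 - x1 <> 0 \/ y2 - x2 <> 0) by (destruct H'; [left|right]; lra).
  pose proof (sq_pos_neq _ _ H0). lra.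
Qed.

Ltac dpts := repeat match goal with p : pt |- _ => destruct p end.

Lemma reflH_invol h d z : dot d d <> 0 -> reflH h d (reflH h d z) = z.
Proof. unfold reflH, dot, psub, pscale. dpts. simpl. intros Hd. f_equal; field; auto. Qed.

Lemma reflH_isom h d a b : dot d d <> 0 -> Dsq (reflH h d a) (reflH h d b) = Dsq a b.
Proof. unfold reflH, Dsq, dot, psub, pscale. dpts. simpl. intros Hd. field; auto. Qed.

Lemma reflH_inj h d a b : dot d d <> 0 -> reflH h d a = reflH h d b -> a = b.
Proof. intros Hd E. rewrite <- (reflH_invol h d a Hd), <- (reflH_invol h d b Hd), E. reflexivity. Qed.

Definition psum (l : list pt) : pt := fold_right padd (0,0) l.

Lemma psum_perm l l' : Permutation l l' -> psum l = psum l'.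
Proof.
  induction 1; simpl; auto.
  - rewrite IHPermutation; auto.
  - unfold padd; dpts; simpl; f_equal; ring.
  - congruence.
Qed.

Lemma psum_map_reflH h d l : dot d d <> 0 ->
  psum (map (reflH h d) l) =
  psub (psum l) (pscale (2 * (dot (psum l) d - INR (length l) * dot h d) / dot d d) d).
Proof.
  intros Hd. induction l as [|z l IH].
  - simpl. unfold psub, pscale, dot; dpts; simpl. f_equal; field; auto.
  - change (psum (map (reflH h d) (z :: l))) with (padd (reflH h d z) (psum (map (reflH h d) l))).
    change (psum (z::l)) with (padd z (psum l)). change (length (z::l)) with (S (length l)).
    rewrite IH. rewrite S_INR. unfold reflH, psub, pscale, padd, dot in *. 
    destruct (psum l). dpts. simpl in *. f_equal; field; auto.
Qed.

Lemma reflH_fix_dot h d z : dot d d <> 0 -> reflH h d z = z -> dot (psub z h) d = 0.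
Proof.
  destruct h as [h1 h2], d as [d1 d2], z as [z1 z2].
  unfold reflH, dot, psub, pscale. simpl. intros Hd E. injection E; intros E2 E1.
  set (k := 2 * ((z1 - h1) * d1 + (z2 - h2) * d2) / (d1 * d1 + d2 * d2)) in *.
  assert (H3 : k*d1 = 0) by lra. assert (H4 : k*d2 = 0) by lra.
  assert (Hk : k = 0).
  { destruct (Req_dec d1 0); [destruct (Req_dec d2 0)|].
    - subst. lra.
    - apply Rmult_integral in H4; destruct H4; auto; lra.
    - apply Rmult_integral in H3; destruct H3; auto; lra. }
  unfold k in Hk.
  assert (2 * ((z1 - h1) * d1 + (z2 - h2) * d2) = 0).
  { apply (Rmult_eq_reg_r (/ (d1 * d1 + d2 * d2))). rewrite Rmult_0_l. exact Hk.
    apply Rinv_neq_0_compat; auto. }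
  lra.
Qed.

Lemma mid_dot_Dsq x y z : dot (psub z (pscale (/2) (padd x y))) (psub y x) = 0 -> Dsq z x = Dsq z y.
Proof. unfold Dsq, dot, psub, pscale, padd. dpts. simpl. intros H. nra. Qed.

Lemma psum_map_Psi L nu i l :
  psum (map (Psi L nu i) l) = padd (pscale (/L) (psum l)) (pscale (INR (length l)) (nu i)).
Proof.
  induction l as [|z l IH].
  - simpl. unfold padd, pscale. destruct (nu i). simpl. f_equal; ring.
  - change (psum (map (Psi L nu i) (z :: l))) with (padd (Psi L nu i z) (psum (map (Psi L nu i) l))).
    change (psum (z::l)) with (padd z (psum l)). change (length (z::l)) with (S (length l)).
    rewrite IH, S_INR. unfold Psi, padd, pscale. destruct (nu i), (psum l), z. simpl. f_equal; ring.
Qed.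

Lemma coef_zero S c d : dot d d <> 0 -> psub S (pscale c d) = S -> c = 0.
Proof.
  destruct S as [s1 s2], d as [d1 d2]. unfold dot, psub, pscale; simpl. intros Hd E.
  injection E; intros E2 E1.
  assert (H1 : c*d1 = 0) by lra. assert (H2 : c*d2 = 0) by lra.
  destruct (Req_dec c 0); auto. exfalso. apply Hd.
  apply Rmult_integral in H1; apply Rmult_integral in H2.
  destruct H1; [lra|]; destruct H2; [lra|]. subst; ring.
Qed.

Lemma cell0_alg L S h d v v' nj : L <> 0 -> dot d d <> 0 ->
  psub (pscale (/L) S) (pscale (2 * (dot (pscale (/L) S) d - 4 * dot h d) / dot d d) d) = padd (pscale (/L) S) (pscale 4 nj) ->
  reflH h d (pscale (/L) v) = padd (pscale (/L) v') nj ->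
  reflH (pscale (/4) S) d v = v'.
Proof.
  destruct S as [S1 S2], h as [h1 h2], d as [d1 d2], v as [v1 v2], v' as [w1 w2], nj as [n1 n2].
  unfold reflH, dot, psub, pscale, padd; simpl. intros HL Hd E1 E2.
  injection E1; intros A2 A1. injection E2; intros B2 B1.
  set (c := 2 * (/ L * S1 * d1 + / L * S2 * d2 - 4 * (h1 * d1 + h2 * d2)) / (d1 * d1 + d2 * d2)) in *.
  set (k := 2 * ((/ L * v1 - h1) * d1 + (/ L * v2 - h2) * d2) / (d1 * d1 + d2 * d2)) in *.
  assert (N1 : n1 = - (c*d1)/4) by lra. assert (N2 : n2 = - (c*d2)/4) by lra.
  assert (W1 : w1 = L * (/L*v1 - k*d1 - n1)).
  { assert (/L*w1 = /L*v1 - k*d1 - n1) by lra. rewrite <- H. field. auto. }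
  assert (W2 : w2 = L * (/L*v2 - k*d2 - n2)).
  { assert (/L*w2 = /L*v2 - k*d2 - n2) by lra. rewrite <- H. field. auto. }
  rewrite W1, W2, N1, N2. unfold c, k. f_equal; field; auto.
Qed.

Lemma Dsq_comp a1 a2 b1 b2 : Dsq (a1,a2) (b1,b2) = (a1-b1)^2+(a2-b2)^2.
Proof. unfold Dsq, dot, psub; simpl; ring. Qed.

Lemma Dsq_sym a b : Dsq a b = Dsq b a.
Proof. unfold Dsq, dot, psub; dpts; simpl; ring. Qed.

Lemma L3_pt a b c o r : Dsq a o = r -> Dsq b o = r -> Dsq c o = r ->
  cross (psub b a) (psub c a) = 0 -> a <> b -> a <> c -> b <> c -> False.
Proof.
  destruct a as [a1 a2], b as [b1 b2], c as [c1 c2], o as [o1 o2]. rewrite !Dsq_comp.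
  unfold cross, psub; simpl. intros H1 H2 H3 H4 H5 H6 H7. apply (L3 a1 a2 b1 b2 c1 c2 o1 o2 r); auto.
Qed.

Lemma L3b_pt a b c o p r s : Dsq a o = r -> Dsq b o = r -> Dsq c o = r ->
  Dsq a p = s -> Dsq b p = s -> Dsq c p = s -> o <> p -> a <> b -> a <> c -> b <> c -> False.
Proof.
  destruct a as [a1 a2], b as [b1 b2], c as [c1 c2], o as [o1 o2], p as [p1 p2]. rewrite !Dsq_comp.
  intros H1 H2 H3 H4 H5 H6 H7 H8 H9 H10. apply (L3b a1 a2 b1 b2 c1 c2 o1 o2 p1 p2 r s); auto.
Qed.

Lemma dot2_zero u a b : dot u a = 0 -> dot u b = 0 -> cross a b <> 0 -> u = (0,0).
Proof.
  destruct u as [u1 u2], a as [a1 a2], b as [b1 b2]. unfold dot, cross; simpl. intros Ha Hb Hc.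
  assert (u1 * (a1*b2 - a2*b1) = 0).
  { replace (u1 * (a1*b2 - a2*b1)) with (b2*(u1*a1+u2*a2) - a2*(u1*b1+u2*b2)) by ring. rewrite Ha, Hb; ring. }
  assert (u2 * (a1*b2 - a2*b1) = 0).
  { replace (u2 * (a1*b2 - a2*b1)) with (-b1*(u1*a1+u2*a2) + a1*(u1*b1+u2*b2)) by ring. rewrite Ha, Hb; ring. }
  apply Rmult_integral in H; apply Rmult_integral in H0.
  destruct H; [|contradiction]; destruct H0; [|contradiction]. subst; reflexivity.
Qed.

Lemma padd_0 x : padd x (0,0) = x.
Proof. unfold padd; dpts; simpl; f_equal; ring. Qed.

Lemma padd_scale0 x c : padd x (pscale c (0,0)) = x.
Proof. unfold padd, pscale; dpts; simpl; f_equal; ring. Qed.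

Lemma para_of (G a b c d : pt) :
  psub b G = pscale (-1) (psub a G) -> psub d G = pscale (-1) (psub c G) ->
  Dsq a G = Dsq b G -> Dsq a G = Dsq c G -> a <> b -> a <> c -> b <> c ->
  cross (psub a G) (psub c G) <> 0 /\ a = padd G (psub a G) /\ b = psub G (psub a G) /\
  c = padd G (psub c G) /\ d = psub G (psub c G).
Proof.
  intros Hb Hd Hab Hac Nab Nac Nbc. split; [|split;[|split;[|split]]].
  - intros Hcr. apply (L3_pt a b c G (Dsq a G)); auto.
    revert Hcr Hb. unfold cross, psub, pscale. dpts. simpl. intros Hcr Hb'. injection Hb'; intros.
    nra.
  - unfold padd, psub. dpts; simpl; f_equal; ring.
  - revert Hb. unfold padd, psub, pscale. dpts; simpl. intros Hb'; injection Hb'; intros. f_equal; lra.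
  - unfold padd, psub. dpts; simpl; f_equal; ring.
  - revert Hd. unfold padd, psub, pscale. dpts; simpl. intros Hd'; injection Hd'; intros. f_equal; lra.
Qed.
Import ListNotations.

Lemma nodup4 (a b c d : pt) : NoDup [a;b;c;d] ->
  a <> b /\ a <> c /\ a <> d /\ b <> c /\ b <> d /\ c <> d.
Proof.
  intros H. inversion H as [|? ? Ha H1]; subst. inversion H1 as [|? ? Hb H2]; subst.
  inversion H2 as [|? ? Hc H3]; subst. simpl in *. intuition congruence.
Qed.

Lemma final_para (G v1 v2 v3 v4 : pt) : NoDup [v1;v2;v3;v4] ->
  Dsq v1 G = Dsq v2 G -> Dsq v1 G = Dsq v3 G -> Dsq v1 G = Dsq v4 G ->
  psum [v1;v2;v3;v4] = pscale 4 G ->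
  exists p q, cross p q <> 0 /\
    forall v, In v [v1;v2;v3;v4] <-> (v = padd G p \/ v = psub G p \/ v = padd G q \/ v = psub G q).
Proof.
  intros Hnd H2 H3 H4 Hs. pose proof (nodup4 _ _ _ _ Hnd) as (N12&N13&N14&N23&N24&N34).
  assert (C : (psub v2 G = pscale (-1) (psub v1 G)) \/ (psub v3 G = pscale (-1) (psub v1 G)) \/
              (psub v4 G = pscale (-1) (psub v1 G))).
  { revert H2 H3 H4 Hs. unfold Dsq, dot, psum, psub, pscale, padd.
    destruct G as [g1 g2], v1 as [a1 a2], v2 as [b1 b2], v3 as [c1 c2], v4 as [d1 d2]. simpl.
    intros H2 H3 H4 Hs. injection Hs; intros S2 S1.
    destruct (four_pairs (a1-g1) (a2-g2) (b1-g1) (b2-g2) (c1-g1) (c2-g2) (d1-g1) (d2-g2)) as [[E1 E2]|[[E1 E2]|[E1 E2]]];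
      try lra.
    - left. f_equal; lra.
    - right; left. f_equal; lra.
    - right; right. f_equal; lra. }
  simpl. destruct C as [C|[C|C]].
  - assert (C' : psub v4 G = pscale (-1) (psub v3 G)).
    { revert C Hs. unfold psum, psub, pscale, padd. dpts. simpl. intros C Hs. injection C; injection Hs; intros. f_equal; lra. }
    destruct (para_of G v1 v2 v3 v4 C C' H2 H3 N12 N13 N23) as (Hc & E1 & E2 & E3 & E4).
    exists (psub v1 G), (psub v3 G). split; auto. intros v. rewrite <- E1, <- E2, <- E3, <- E4. intuition.
  - assert (C' : psub v4 G = pscale (-1) (psub v2 G)).
    { revert C Hs. unfold psum, psub, pscale, padd. dpts. simpl. intros C Hs. injection C; injection Hs; intros. f_equal; lra. }
    destruct (para_of G v1 v3 v2 v4 C C' H3 H2 N13 N12 (not_eq_sym N23)) as (Hc & E1 & E2 & E3 & E4).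
    exists (psub v1 G), (psub v2 G). split; auto. intros v. rewrite <- E1, <- E2, <- E3, <- E4. intuition.
  - assert (C' : psub v3 G = pscale (-1) (psub v2 G)).
    { revert C Hs. unfold psum, psub, pscale, padd. dpts. simpl. intros C Hs. injection C; injection Hs; intros. f_equal; lra. }
    destruct (para_of G v1 v4 v2 v3 C C' H4 H2 N14 N12 (not_eq_sym N24)) as (Hc & E1 & E2 & E3 & E4).
    exists (psub v1 G), (psub v2 G). split; auto. intros v. rewrite <- E1, <- E2, <- E3, <- E4. intuition.
Qed.

Lemma psub_zero a b : psub a b = (0,0) -> a = b.
Proof. unfold psub; dpts; simpl; intros E; injection E; intros; f_equal; lra. Qed.

Lemma pscale_4 S : pscale 4 (pscale (/4) S) = S.
Proof. unfold pscale; dpts; simpl; f_equal; field. Qed.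

Lemma geom L N nu K l0 :
  simple_nested_fractal L N nu K -> NoDup l0 -> length l0 = 4%nat ->
  (forall x, V0 L N nu x <-> In x l0) ->
  exists g p q, cross p q <> 0 /\
    forall v, In v l0 <-> (v = padd g p \/ v = psub g p \/ v = padd g q \/ v = psub g q).
Proof.
  intros [HL [HN [Hnu0 [Hatt [Hosc [Hnest [Hsym Hconn]]]]]]] Hnd Hlen HV.
  assert (HL0 : L <> 0) by lra.
  set (lU := nodup pt_eq_dec (flat_map (fun i => map (Psi L nu i) l0) (seq 0 N))).
  assert (memU : forall z, In z lU <-> exists i v, (i < N)%nat /\ In v l0 /\ z = Psi L nu i v).
  { intros z. unfold lU. rewrite nodup_In, in_flat_map. split.
    - intros [i [Hi Hz]]. apply in_seq in Hi. apply in_map_iff in Hz. destruct Hz as [v [Ev Hv]].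
      exists i, v. repeat split; auto; lia.
    - intros [i [v [Hi [Hv Ez]]]]. exists i. split. apply in_seq; lia. apply in_map_iff. exists v; auto. }
  assert (reflU : forall x y z, In x l0 -> In y l0 -> x <> y -> In z lU -> In (refl_bisector x y z) lU).
  { intros x y z Hx Hy Hxy Hz. apply memU in Hz. destruct Hz as [i [v [Hi [Hv Ez]]]].
    destruct (Hsym i x y Hi (proj2 (HV x) Hx) (proj2 (HV y) Hy) Hxy) as [j [Hj Hiff]].
    assert (img (Psi L nu j) (V0 L N nu) (refl_bisector x y z)) as Him.
    { apply Hiff. exists z. split; auto. exists v. split; auto. apply HV; auto. }
    destruct Him as [v' [Hv' E']]. apply memU. exists j, v'. repeat split; auto. apply HV; auto. }
  set (nU := length lU).
  assert (HnU : (0 < nU)%nat).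
  { destruct l0 as [|v0 l0']; [simpl in Hlen; discriminate|].
    assert (In (Psi L nu 0 v0) lU) as Hin by (apply memU; exists 0%nat, v0; repeat split; simpl; auto; lia).
    unfold nU. destruct lU; simpl in *; [contradiction|lia]. }
  set (G := pscale (/ INR nU) (psum lU)).
  assert (Hcirc : forall x y, In x l0 -> In y l0 -> x <> y -> Dsq G x = Dsq G y).
  { intros x y Hx Hy Hxy. apply mid_dot_Dsq.
    set (h := pscale (/2) (padd x y)). set (d := psub y x).
    assert (Hd : dot d d <> 0) by (apply dd_neq; auto).
    assert (Hperm : Permutation (map (reflH h d) lU) lU).
    { apply NoDup_Permutation_bis.
      - apply FinFun.Injective_map_NoDup. intros a b; apply reflH_inj; auto. apply NoDup_nodup.
      - rewrite length_map. lia.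
      - intros z Hz. apply in_map_iff in Hz. destruct Hz as [z' [Ez Hz']]. subst z.
        apply (reflU x y z' Hx Hy Hxy Hz'). }
    apply psum_perm in Hperm. rewrite psum_map_reflH in Hperm by auto.
    apply coef_zero in Hperm; auto.
    fold nU in Hperm.
    assert (E : dot (psum lU) d - INR nU * dot h d = 0).
    { unfold Rdiv in Hperm. apply Rmult_integral in Hperm. destruct Hperm as [Hp|Hp].
      - lra.
      - exfalso. apply Rinv_neq_0_compat in Hd. contradiction. }
    assert (HnR : INR nU <> 0) by (apply not_0_INR; lia).
    unfold G. clearbody h d. clear - E HnR. destruct (psum lU) as [s1 s2], h as [h1 h2], d as [d1 d2].
    unfold dot, psub, pscale in *. simpl in *.
    apply (Rmult_eq_reg_l (INR nU)); auto.
    replace (INR nU * ((/ INR nU * s1 - h1) * d1 + (/ INR nU * s2 - h2) * d2)) with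
      (s1 * d1 + s2 * d2 - INR nU * (h1 * d1 + h2 * d2)) by (field; auto).
    lra. }
  set (S := psum l0). set (H := pscale (/4) S).
  assert (Hsymm : forall x y v, In x l0 -> In y l0 -> x <> y -> In v l0 -> In (reflH H (psub y x) v) l0).
  { intros x y v Hx Hy Hxy Hv.
    assert (H0N : (0 < N)%nat) by lia.
    destruct (Hsym 0%nat x y H0N (proj2 (HV x) Hx) (proj2 (HV y) Hy) Hxy) as [j [Hj Hiff]].
    set (h := pscale (/2) (padd x y)). set (d := psub y x).
    assert (Hd : dot d d <> 0) by (apply dd_neq; auto).
    set (A := map (fun v => reflH h d (Psi L nu 0 v)) l0).
    set (B := map (Psi L nu j) l0).
    assert (HAB : forall z, In z A <-> In z B).
    { intros z. unfold A, B. rewrite !in_map_iff. split.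
      - intros [u [Eu Hu]]. assert (img (Psi L nu j) (V0 L N nu) z) as Him.
        { apply Hiff. exists (Psi L nu 0 u). split. exists u. split; auto. apply HV; auto. rewrite <- Eu. reflexivity. }
        destruct Him as [u' [Hu' Eu']]. exists u'. split; auto. apply HV; auto.
      - intros [u [Eu Hu]]. assert (img (refl_bisector x y) (img (Psi L nu 0) (V0 L N nu)) z) as Him.
        { apply Hiff. exists u. split; auto. apply HV; auto. }
        destruct Him as [a [[u' [Hu' Ea]] Ez]]. exists u'. split; [|apply HV; auto]. subst. rewrite Ez. reflexivity. }
    assert (Hperm : Permutation A B).
    { apply NoDup_Permutation; auto.
      - apply FinFun.Injective_map_NoDup; auto. intros a b E. apply reflH_inj in E; auto. apply Psi_inj in E; auto.
      - apply FinFun.Injective_map_NoDup; auto. intros a b E. apply Psi_inj in E; auto. }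
    apply psum_perm in Hperm.
    unfold A in Hperm. rewrite <- (map_map (Psi L nu 0) (reflH h d)) in Hperm.
    rewrite psum_map_reflH in Hperm by auto. unfold B in Hperm. rewrite !psum_map_Psi, !length_map, Hlen in Hperm.
    rewrite Hnu0, padd_scale0 in Hperm. fold S in Hperm.
    replace (INR 4) with 4 in Hperm by (simpl; ring).
    assert (In (reflH h d (Psi L nu 0 v)) B) as HB. { apply HAB. unfold A. apply in_map_iff. exists v; auto. }
    unfold B in HB. apply in_map_iff in HB. destruct HB as [v' [Ev' Hv']].
    replace (reflH H d v) with v'; auto. symmetry.
    apply (cell0_alg L S h d v v' (nu j)); auto.
    unfold Psi in Ev'. rewrite Ev'. unfold Psi. rewrite Hnu0, padd_0. reflexivity. }
  assert (Hl4 : exists a b c e, l0 = [a;b;c;e]).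
  { clear - Hlen. destruct l0 as [|a [|b [|c [|e [|? ?]]]]]; simpl in Hlen; try discriminate. exists a, b, c, e; reflexivity. }
  destruct Hl4 as [v1 [v2 [v3 [v4 El0]]]].
  pose proof (nodup4 v1 v2 v3 v4 ltac:(rewrite <- El0; exact Hnd)) as (N12&N13&N14&N23&N24&N34).
  assert (I1 : In v1 l0) by (rewrite El0; simpl; auto).
  assert (I2 : In v2 l0) by (rewrite El0; simpl; auto).
  assert (I3 : In v3 l0) by (rewrite El0; simpl; auto).
  assert (I4 : In v4 l0) by (rewrite El0; simpl; auto).
  set (r := Dsq G v1).
  assert (Hall : forall v, In v l0 -> Dsq G v = r).
  { intros v Hv. destruct (pt_eq_dec v v1) as [->|Hne]; [reflexivity|]. unfold r. symmetry. apply Hcirc; auto. }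
  assert (Hperp : forall x y, In x l0 -> In y l0 -> x <> y -> dot (psub G H) (psub y x) = 0).
  { intros x y Hx Hy Hxy. set (d := psub y x). assert (Hd : dot d d <> 0) by (apply dd_neq; auto).
    destruct (Req_dec (dot (psub G H) d) 0) as [|Hne]; auto. exfalso.
    assert (HRG : reflH H d G <> G) by (intro E; apply reflH_fix_dot in E; auto).
    apply (L3b_pt (reflH H d v1) (reflH H d v2) (reflH H d v3) G (reflH H d G) r r).
    - rewrite Dsq_sym. apply Hall. apply Hsymm; auto.
    - rewrite Dsq_sym. apply Hall. apply Hsymm; auto.
    - rewrite Dsq_sym. apply Hall. apply Hsymm; auto.
    - rewrite reflH_isom by auto. rewrite Dsq_sym. apply Hall; auto.
    - rewrite reflH_isom by auto. rewrite Dsq_sym. apply Hall; auto.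
    - rewrite reflH_isom by auto. rewrite Dsq_sym. apply Hall; auto.
    - intro E; apply HRG; auto.
    - intro E; apply reflH_inj in E; auto.
    - intro E; apply reflH_inj in E; auto.
    - intro E; apply reflH_inj in E; auto. }
  assert (Hcr : cross (psub v2 v1) (psub v3 v1) <> 0).
  { intro Hc. apply (L3_pt v1 v2 v3 G r); auto; rewrite Dsq_sym; apply Hall; auto. }
  assert (HGH : G = H).
  { pose proof (dot2_zero _ _ _ (Hperp v1 v2 I1 I2 N12) (Hperp v1 v3 I1 I3 N13) Hcr) as Z.
    apply psub_zero; auto. }
  assert (HS : psum [v1;v2;v3;v4] = pscale 4 G).
  { rewrite <- El0. fold S. rewrite HGH. unfold H. symmetry; apply pscale_4. }
  destruct (final_para G v1 v2 v3 v4) as [p [q [Hpq Hmem]]]; auto.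
  - rewrite <- El0; auto.
  - rewrite !(Dsq_sym _ G). fold r. rewrite !Hall; auto.
  - rewrite !(Dsq_sym _ G). fold r. rewrite !Hall; auto.
  - rewrite !(Dsq_sym _ G). fold r. rewrite !Hall; auto.
  - exists G, p, q. split; auto. intros v. rewrite El0. apply Hmem.
Qed.
Import ListNotations.

Definition CO (a b : R) := (a = 1 /\ b = 0) \/ (a = -1 /\ b = 0) \/ (a = 0 /\ b = 1) \/ (a = 0 /\ b = -1).

Ltac coc H := destruct H as [[-> ->]|[[-> ->]|[[-> ->]|[-> ->]]]].

Lemma K1c a b a' b' a1 b1 a2 b2 lam : CO a b -> CO a' b' -> CO a1 b1 -> CO a2 b2 ->
  ~(a' = a /\ b' = b) -> ~(a' = -a /\ b' = -b) ->
  a + a' = lam*(a1-a2) -> b + b' = lam*(b1-b2) -> 1 < lam -> False.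
Proof.
  intros C1 C2 C3 C4 N1 N2 E1 E2 Hl.
  coc C1; coc C2; coc C3; coc C4;
  first [ lra | exfalso; apply N1; split; lra | exfalso; apply N2; split; lra ].
Qed.

Lemma K2c a b a' b' a'' b'' t : CO a b -> CO a' b' -> CO a'' b'' ->
  ~(a' = a /\ b' = b) -> ~(a' = -a /\ b' = -b) -> 0 < t < 1 ->
  (1-t)*a - t*a' = a'' -> (1-t)*b - t*b' = b'' -> False.
Proof.
  intros C1 C2 C3 N1 N2 Ht E1 E2.
  coc C1; coc C2; coc C3;
  first [ lra | exfalso; apply N1; split; lra | exfalso; apply N2; split; lra ].
Qed.

Section Comb.
Variables (L : R) (N : nat) (nu : nat -> pt) (K : pt -> Prop) (l0 : list pt) (g p q : pt).
Hypotheses (HL : 1 < L) (HN : (2 <= N)%nat) (Hnu0 : nu 0%nat = (0,0))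
  (Hatt : attractor L N nu K) (Hnest : nesting L N nu K)
  (HV : forall x, V0 L N nu x <-> In x l0) (Hpq : cross p q <> 0)
  (Hmem : forall v, In v l0 <-> (v = padd g p \/ v = psub g p \/ v = padd g q \/ v = psub g q)).

Definition lc (a b : R) : pt := (fst g + a * fst p + b * fst q, snd g + a * snd p + b * snd q).
Definition rho (v : pt) : pt := (2 * fst g - fst v, 2 * snd g - snd v).

Lemma mem_lc v : In v l0 <-> exists a b, CO a b /\ v = lc a b.
Proof.
  rewrite Hmem. unfold lc, CO, padd, psub. destruct g as [g1 g2], p as [p1 p2], q as [q1 q2]. simpl.
  split.
  - intros [E|[E|[E|E]]]; subst.
    + exists 1, 0. split; [left; split; reflexivity|]. f_equal; ring.
    + exists (-1), 0. split; [right; left; split; reflexivity|]. f_equal; ring.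
    + exists 0, 1. split; [right; right; left; split; reflexivity|]. f_equal; ring.
    + exists 0, (-1). split; [right; right; right; split; reflexivity|]. f_equal; ring.
  - intros [a [b [C E]]]. subst. coc C.
    + left. f_equal; ring.
    + right; left. f_equal; ring.
    + right; right; left. f_equal; ring.
    + right; right; right. f_equal; ring.
Qed.

Lemma lc_uniq a b a' b' :
  a * fst p + b * fst q = a' * fst p + b' * fst q ->
  a * snd p + b * snd q = a' * snd p + b' * snd q -> a = a' /\ b = b'.
Proof.
  unfold cross in Hpq. destruct p as [p1 p2], q as [q1 q2]. simpl in *. intros E1 E2.
  assert ((a - a') * (p1*q2 - p2*q1) = 0).
  { replace ((a - a') * (p1*q2 - p2*q1)) with ((a*p1 + b*q1 - (a'*p1 + b'*q1))*q2 - (a*p2+b*q2 - (a'*p2+b'*q2))*q1) by ring.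
    rewrite E1, E2. ring. }
  assert ((b - b') * (p1*q2 - p2*q1) = 0).
  { replace ((b - b') * (p1*q2 - p2*q1)) with (-(a*p1 + b*q1 - (a'*p1 + b'*q1))*p2 + (a*p2+b*q2 - (a'*p2+b'*q2))*p1) by ring.
    rewrite E1, E2. ring. }
  apply Rmult_integral in H; apply Rmult_integral in H0.
  destruct H; [|contradiction]; destruct H0; [|contradiction]. split; lra.
Qed.

Lemma rho_lc a b : rho (lc a b) = lc (-a) (-b).
Proof. unfold rho, lc. simpl. f_equal; ring. Qed.

Lemma rho_rho v : rho (rho v) = v.
Proof. unfold rho. destruct v; simpl; f_equal; ring. Qed.

Lemma rho_in v : In v l0 -> In (rho v) l0.
Proof. rewrite !mem_lc. intros [a [b [C E]]]. subst. rewrite rho_lc. exists (-a), (-b). split; auto.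
  unfold CO in *. coc C; [right;left|left|right;right;right|right;right;left]; split; lra. Qed.

Lemma adj_coef a b a' b' : lc a' b' <> lc a b -> lc a' b' <> rho (lc a b) ->
  ~(a' = a /\ b' = b) /\ ~(a' = -a /\ b' = -b).
Proof.
  intros N1 N2. rewrite rho_lc in N2. split; intros [E1 E2]; subst; auto.
Qed.

Lemma K1 v v' u1 u2 lam : In v l0 -> In v' l0 -> v' <> v -> v' <> rho v ->
  In u1 l0 -> In u2 l0 -> 1 < lam -> psub v (rho v') = pscale lam (psub u1 u2) -> False.
Proof.
  rewrite !mem_lc. intros [a [b [C1 E1]]] [a' [b' [C2 E2]]] N1 N2 [a1 [b1 [C3 E3]]] [a2 [b2 [C4 E4]]] Hl E.
  subst. destruct (adj_coef a b a' b' N1 N2) as [M1 M2].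
  unfold psub, pscale, rho, lc in E. simpl in E. injection E; intros F2 F1.
  destruct (lc_uniq (a + a') (b + b') (lam*(a1-a2)) (lam*(b1-b2))) as [G1 G2].
  - lra.
  - lra.
  - apply (K1c a b a' b' a1 b1 a2 b2 lam); auto.
Qed.

Lemma K2 v v' t : In v l0 -> In v' l0 -> v' <> v -> v' <> rho v -> 0 < t < 1 ->
  In (padd v (pscale t (psub (rho v') v))) l0 -> False.
Proof.
  rewrite !mem_lc. intros [a [b [C1 E1]]] [a' [b' [C2 E2]]] N1 N2 Ht [a'' [b'' [C3 E3]]].
  subst. destruct (adj_coef a b a' b' N1 N2) as [M1 M2].
  unfold padd, psub, pscale, rho, lc in E3. simpl in E3. injection E3; intros F2 F1.
  destruct (lc_uniq ((1-t)*a - t*a') ((1-t)*b - t*b') a'' b'') as [G1 G2].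
  - lra.
  - lra.
  - apply (K2c a b a' b' a'' b'' t); auto.
Qed.



Fixpoint hw (w : list nat) : pt :=
  match w with nil => (0,0) | i :: w' => padd (nu i) (pscale L (hw w')) end.

Lemma L0 : L <> 0. Proof. lra. Qed.

Lemma ws_h e w : word_shift L nu e w = pscale (powerRZ L e) (hw w).
Proof.
  revert e. induction w as [|i w IH]; intros e; simpl.
  - unfold pscale; simpl; f_equal; ring.
  - rewrite IH. rewrite powerRZ_add by apply L0.
    replace (powerRZ L 1) with L by (simpl; ring).
    unfold padd, pscale. destruct (nu i), (hw w). simpl. f_equal; ring.
Qed.

Lemma cs_h w : complex_shift L nu 0 w = pscale L (hw w).
Proof. unfold complex_shift. rewrite ws_h. f_equal. simpl. ring. Qed.

Lemma hw_app w a : hw (w ++ [a]) = padd (hw w) (pscale (L ^ length w) (nu a)).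
Proof.
  induction w as [|i w IH]; simpl.
  - unfold padd, pscale. destruct (nu a). simpl. f_equal; ring.
  - rewrite IH. unfold padd, pscale. destruct (nu a), (nu i), (hw w). simpl. f_equal; ring.
Qed.

Lemma hw_pad w k : hw (w ++ repeat 0%nat k) = hw w.
Proof.
  induction w as [|i w IH]; simpl.
  - induction k as [|k IHk]; simpl; auto. rewrite IHk, Hnu0. unfold padd, pscale; simpl; f_equal; ring.
  - rewrite IH; auto.
Qed.

Definition Cw (w : list nat) (v : pt) : pt := pscale (/ (L ^ length w)) (padd v (pscale L (hw w))).

Lemma Lpow_pos n : 0 < L ^ n.
Proof. apply pow_lt; lra. Qed.

Lemma Cw_nil v : Cw [] v = v.
Proof. unfold Cw, pscale, padd. destruct v; simpl; f_equal; field. Qed.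

Lemma Cw_snoc w a v : Cw (w ++ [a]) v = Psi L nu a (Cw w v).
Proof.
  unfold Cw, Psi. rewrite hw_app, length_app. simpl. rewrite Nat.add_1_r. simpl.
  pose proof (Lpow_pos (length w)). set (k := L ^ length w) in *.
  unfold padd, pscale. destruct v, (nu a), (hw w). simpl. f_equal; field; split; lra.
Qed.

Lemma Cw_K w v : K v -> (forall i, In i w -> (i < N)%nat) -> K (Cw w v).
Proof.
  intros Kv. induction w as [|a w IH] using rev_ind; intros Hw.
  - rewrite Cw_nil; auto.
  - rewrite Cw_snoc. destruct Hatt as [_ [_ [_ Ha]]]. apply Ha. exists a. split.
    + apply Hw. apply in_or_app; simpl; auto.
    + exists (Cw w v). split; auto. apply IH. intros i Hi; apply Hw; apply in_or_app; auto.
Qed.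

Lemma V0_K v : In v l0 -> K v.
Proof.
  intros Hv. apply HV in Hv. destruct Hv as [[c [Hc Hf]] _].
  apply (fixed_in_K L N nu K c v); auto.
Qed.

Lemma Cw_second w w' v v' : length w = length w' -> Cw w v = Cw w' v' -> Cw w (rho v') = Cw w' (rho v).
Proof.
  unfold Cw, rho. intros El. rewrite <- El. set (k := / L ^ length w).
  unfold padd, pscale. destruct v, v', (hw w), (hw w'). simpl. intros E. injection E; intros E2 E1.
  f_equal; nra.
Qed.

Lemma Cw_diff w z z' u u' : Cw w z = u -> Cw w z' = u' ->
  psub z z' = pscale (L ^ length w) (psub u u').
Proof.
  unfold Cw. intros <- <-. pose proof (Lpow_pos (length w)). set (k := L ^ length w) in *.
  unfold psub, padd, pscale. destruct z, z', (hw w). simpl. f_equal; field; lra.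
Qed.

Lemma corner a b v v' : (a < N)%nat -> (b < N)%nat -> a <> b -> In v l0 -> In v' l0 ->
  v' <> v -> v' <> rho v -> Psi L nu a v = Psi L nu b v' -> False.
Proof.
  intros Ha Hb Hab Hv Hv' N1 N2 E.
  destruct (proj2 (HV v) Hv) as [[c [Hc Fc]] _].
  destruct (proj2 (HV v') Hv') as [[c' [Hc' Fc']] _].
  set (y1 := Psi L nu c (rho v')). set (y2 := Psi L nu c' (rho v)).
  assert (Ky1 : K y1).
  { destruct Hatt as [_ [_ [_ Hat]]]. apply Hat. exists c. split; auto. exists (rho v'). split; auto.
    apply V0_K, rho_in; auto. }
  assert (Ky2 : K y2).
  { destruct Hatt as [_ [_ [_ Hat]]]. apply Hat. exists c'. split; auto. exists (rho v). split; auto.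
    apply V0_K, rho_in; auto. }
  assert (Ey : Psi L nu a y1 = Psi L nu b y2).
  { unfold y1, y2. revert E Fc Fc'. unfold Psi, rho, padd, pscale.
    destruct v as [v1 v2], v' as [w1 w2], (nu a) as [na1 na2], (nu b) as [nb1 nb2], (nu c) as [nc1 nc2], (nu c') as [nd1 nd2].
    simpl. intros E Fc Fc'. injection E; injection Fc; injection Fc'; intros.
    assert (na1 = /L*w1 + nb1 - /L*v1) by lra. assert (na2 = /L*w2 + nb2 - /L*v2) by lra.
    assert (nc1 = v1 - /L*v1) by lra. assert (nc2 = v2 - /L*v2) by lra.
    assert (nd1 = w1 - /L*w1) by lra. assert (nd2 = w2 - /L*w2) by lra.
    subst na1 na2 nc1 nc2 nd1 nd2. f_equal; field; apply L0. }
  destruct (proj1 (Hnest a b Ha Hb Hab (Psi L nu a y1))) as [[u [Hu Eu]] _].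
  { split; [exists y1; split; auto | exists y2; split; auto]. }
  apply Psi_inj in Eu; [|apply L0].
  apply (K2 v v' (/L)); auto.
  - split. apply Rinv_0_lt_compat; lra. apply (Rmult_lt_reg_l L); [lra|]. rewrite Rinv_r; lra.
  - replace (padd v (pscale (/ L) (psub (rho v') v))) with u. apply HV; auto.
    rewrite <- Eu. unfold y1. revert Fc. unfold Psi, rho, padd, psub, pscale.
    destruct v as [v1 v2], v' as [w1 w2], (nu c) as [nc1 nc2]. simpl. intros Fc; injection Fc; intros.
    assert (nc1 = v1 - /L*v1) by lra. assert (nc2 = v2 - /L*v2) by lra. subst nc1 nc2.
    f_equal; field; apply L0.
Qed.

Lemma IND n : forall w w', length w = n -> length w' = n ->
  (forall i, In i w -> (i < N)%nat) -> (forall i, In i w' -> (i < N)%nat) ->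
  forall v v', In v l0 -> In v' l0 -> Cw w v = Cw w' v' -> v' = v \/ v' = rho v.
Proof.
  induction n as [|n IH]; intros w w' Hl Hl' Hw Hw' v v' Hv Hv' E.
  - destruct w; [|simpl in Hl; discriminate]. destruct w'; [|simpl in Hl'; discriminate].
    rewrite !Cw_nil in E. left; auto.
  - destruct (exists_last (l:=w)) as [w0 [a Ew]]; [intro; subst; simpl in Hl; discriminate|].
    destruct (exists_last (l:=w')) as [w0' [b Ew']]; [intro; subst; simpl in Hl'; discriminate|].
    subst w w'. rewrite length_app in Hl, Hl'. simpl in Hl, Hl'.
    assert (Hl0 : length w0 = n) by lia. assert (Hl0' : length w0' = n) by lia.
    assert (Ha : (a < N)%nat) by (apply Hw; apply in_or_app; simpl; auto).
    assert (Hb : (b < N)%nat) by (apply Hw'; apply in_or_app; simpl; auto).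
    assert (Hw0 : forall i, In i w0 -> (i < N)%nat) by (intros i Hi; apply Hw; apply in_or_app; auto).
    assert (Hw0' : forall i, In i w0' -> (i < N)%nat) by (intros i Hi; apply Hw'; apply in_or_app; auto).
    pose proof E as E0. rewrite !Cw_snoc in E.
    destruct (Nat.eq_dec a b) as [<-|Hab].
    + apply Psi_inj in E; [|apply L0]. apply (IH w0 w0'); auto.
    + destruct (classic (v' = v \/ v' = rho v)) as [|Hn]; auto. exfalso.
      apply not_or_and in Hn. destruct Hn as [N1 N2].
      destruct (proj1 (Hnest a b Ha Hb Hab (Psi L nu a (Cw w0 v)))) as [[u1 [Hu1 Eu1]] _].
      { split; [exists (Cw w0 v); split; auto | exists (Cw w0' v'); split; auto].
        apply Cw_K; auto. apply V0_K; auto. apply Cw_K; auto. apply V0_K; auto. }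
      apply Psi_inj in Eu1; [|apply L0].
      destruct n as [|n'].
      * destruct w0; [|simpl in Hl0; discriminate]. destruct w0'; [|simpl in Hl0'; discriminate].
        rewrite !Cw_nil in E. apply (corner a b v v'); auto.
      * assert (E2 : Cw (w0 ++ [a]) (rho v') = Cw (w0' ++ [b]) (rho v)).
        { apply Cw_second; auto. rewrite !length_app. simpl. lia. }
        rewrite !Cw_snoc in E2.
        destruct (proj1 (Hnest a b Ha Hb Hab (Psi L nu a (Cw w0 (rho v'))))) as [[u2 [Hu2 Eu2]] _].
        { split; [exists (Cw w0 (rho v')); split; auto | exists (Cw w0' (rho v)); split; auto].
          apply Cw_K; auto. apply V0_K, rho_in; auto. apply Cw_K; auto. apply V0_K, rho_in; auto. }
        apply Psi_inj in Eu2; [|apply L0].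
        apply (K1 v v' u1 u2 (L ^ length w0)); auto.
        -- apply HV; auto.
        -- apply HV; auto.
        -- apply Rlt_pow_R1; auto. lia.
        -- apply Cw_diff; auto.
Qed.

Lemma S2 w w' v v' : valid_word N w -> valid_word N w' -> In v l0 -> In v' l0 ->
  padd v (complex_shift L nu 0 w) = padd v' (complex_shift L nu 0 w') -> v' = v \/ v' = rho v.
Proof.
  intros [_ Hw] [_ Hw'] Hv Hv' E. rewrite !cs_h in E.
  set (n := Nat.max (length w) (length w')).
  set (w1 := w ++ repeat 0%nat (n - length w)). set (w1' := w' ++ repeat 0%nat (n - length w')).
  assert (L1 : length w1 = n) by (unfold w1; rewrite length_app, repeat_length; lia).
  assert (L1' : length w1' = n) by (unfold w1'; rewrite length_app, repeat_length; lia).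
  assert (A1 : forall i, In i w1 -> (i < N)%nat).
  { intros i Hi. unfold w1 in Hi. apply in_app_or in Hi. destruct Hi; auto. apply repeat_spec in H. lia. }
  assert (A1' : forall i, In i w1' -> (i < N)%nat).
  { intros i Hi. unfold w1' in Hi. apply in_app_or in Hi. destruct Hi; auto. apply repeat_spec in H. lia. }
  apply (IND n w1 w1'); auto.
  unfold Cw. rewrite L1, L1'. unfold w1, w1'. rewrite !hw_pad. rewrite E. reflexivity.
Qed.

Hypotheses (Hnd : NoDup l0) (Hlen : length l0 = 4%nat).

Definition phi (z : pt) : R := (cross z q / cross p q + cross p z / cross p q) / 2.
Definition par (T : pt) : bool := Z.even (up (phi T)).
Definition sig (b : bool) (v : pt) : pt := if b then rho v else v.

Lemma phi_shift v T : In v l0 ->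
  phi (padd T (psub v (rho v))) = phi T + 1 \/ phi (padd T (psub v (rho v))) = phi T - 1.
Proof.
  rewrite mem_lc. intros [a [b [C ->]]].
  assert (E : phi (padd T (psub (lc a b) (rho (lc a b)))) = phi T + (a + b)).
  { unfold phi, cross, padd, psub, rho, lc. unfold cross in Hpq.
    destruct T, g, p, q. simpl in *. field. auto. }
  rewrite E. coc C; [left|right|left|right]; lra.
Qed.

Lemma up_p1 x : up (x + 1) = (up x + 1)%Z.
Proof.
  destruct (archimed x) as [H1 H2]. symmetry. apply tech_up; rewrite plus_IZR; simpl; lra.
Qed.

Lemma up_m1 x : up (x - 1) = (up x - 1)%Z.
Proof.
  destruct (archimed x) as [H1 H2]. symmetry. apply tech_up; rewrite minus_IZR; simpl; lra.
Qed.

Lemma par_flip T T' : phi T' = phi T + 1 \/ phi T' = phi T - 1 -> par T' = negb (par T).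
Proof.
  unfold par. intros [E|E]; rewrite E.
  - rewrite up_p1. rewrite Z.add_1_r, Z.even_succ. rewrite <- Z.negb_odd, Bool.negb_involutive. reflexivity.
  - rewrite up_m1. rewrite Z.sub_1_r, Z.even_pred. rewrite <- Z.negb_odd, Bool.negb_involutive. reflexivity.
Qed.

Lemma WD w w' v v' : valid_word N w -> valid_word N w' -> In v l0 -> In v' l0 ->
  padd v (complex_shift L nu 0 w) = padd v' (complex_shift L nu 0 w') ->
  sig (par (complex_shift L nu 0 w)) v = sig (par (complex_shift L nu 0 w')) v'.
Proof.
  intros Hw Hw' Hv Hv' E. destruct (S2 w w' v v' Hw Hw' Hv Hv' E) as [ -> | -> ].
  - assert (complex_shift L nu 0 w = complex_shift L nu 0 w') as ->; auto.
    revert E. unfold padd. destruct v, (complex_shift L nu 0 w), (complex_shift L nu 0 w'). simpl.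
    intros E; injection E; intros; f_equal; lra.
  - set (T := complex_shift L nu 0 w) in *. set (T' := complex_shift L nu 0 w') in *.
    assert (ET : T' = padd T (psub v (rho v))).
    { revert E. unfold padd, psub, rho. destruct v, T, T'. simpl. intros E; injection E; intros; f_equal; lra. }
    assert (Hf : par T' = negb (par T)) by (apply par_flip; rewrite ET; apply phi_shift; auto).
    rewrite Hf. unfold sig. destruct (par T); simpl; auto. rewrite rho_rho; auto.
Qed.

Fixpoint idx (x : pt) (l : list pt) : nat :=
  match l with nil => 0%nat | y :: l' => if pt_eq_dec x y then 0%nat else S (idx x l') end.

Lemma idx_lt x l : In x l -> (idx x l < length l)%nat.
Proof. induction l as [|y l IH]; simpl; [tauto|]. intros H. destruct (pt_eq_dec x y); [lia|].
  destruct H as [E|H]; [congruence|]. specialize (IH H); lia. Qed.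

Lemma idx_nth x l d : In x l -> nth (idx x l) l d = x.
Proof. induction l as [|y l IH]; simpl; [tauto|]. intros H. destruct (pt_eq_dec x y); auto.
  destruct H; [congruence|auto]. Qed.

Lemma idx_inj x y l : In x l -> In y l -> idx x l = idx y l -> x = y.
Proof. intros Hx Hy E. rewrite <- (idx_nth x l (0,0)), <- (idx_nth y l (0,0)); auto. rewrite E; auto. Qed.

Lemma nth_idx a l d : NoDup l -> (a < length l)%nat -> idx (nth a l d) l = a.
Proof.
  revert a. induction l as [|y l IH]; intros a Hnd' Ha; simpl in *; [lia|].
  inversion Hnd'; subst. destruct a as [|a]; simpl.
  - destruct (pt_eq_dec y y); congruence.
  - destruct (pt_eq_dec (nth a l d) y) as [E|Ne].
    + exfalso. apply H1. rewrite <- E. apply nth_In. lia.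
    + f_equal. apply IH; auto. lia.
Qed.

Definition lab (x : pt) : nat :=
  match excluded_middle_informative (exists wv : list nat * pt, valid_word N (fst wv) /\ In (snd wv) l0 /\
        x = padd (snd wv) (complex_shift L nu 0 (fst wv))) with
  | left H => let wv := proj1_sig (constructive_indefinite_description _ H) in
              idx (sig (par (complex_shift L nu 0 (fst wv))) (snd wv)) l0
  | right _ => 0%nat
  end.

Lemma lab_eq w v : valid_word N w -> In v l0 ->
  lab (padd v (complex_shift L nu 0 w)) = idx (sig (par (complex_shift L nu 0 w)) v) l0.
Proof.
  intros Hw Hv. unfold lab. destruct excluded_middle_informative as [H|H].
  - destruct (constructive_indefinite_description _ H) as [[w' v'] [Hw' [Hv' E']]]. simpl in *.
    f_equal. apply WD; auto.
  - exfalso. apply H. exists (w, v). simpl. auto.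
Qed.

Lemma cs0 : complex_shift L nu 0 [0%nat] = (0,0).
Proof. rewrite cs_h. simpl. rewrite Hnu0. unfold padd, pscale. simpl. f_equal; ring. Qed.

Lemma valid0 : valid_word N [0%nat].
Proof. split; [discriminate|]. intros i [<-|[]]. lia. Qed.

Lemma par0 : par (0,0) = false.
Proof.
  unfold par. replace (phi (0,0)) with 0.
  - replace (up 0) with 1%Z; auto. apply tech_up; simpl; lra.
  - unfold phi, cross. simpl. unfold cross in Hpq. field. auto.
Qed.

Lemma lab_V0 v : In v l0 -> lab v = idx v l0.
Proof.
  intros Hv. replace v with (padd v (complex_shift L nu 0 [0%nat])) at 1.
  - rewrite lab_eq; auto. rewrite cs0, par0. reflexivity. apply valid0.
  - rewrite cs0, padd_0. reflexivity.
Qed.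

Lemma sig_in b v : In v l0 -> In (sig b v) l0.
Proof. destruct b; simpl; auto. apply rho_in. Qed.

Lemma VMM0 x : VMM L N nu 0 x <-> In x l0.
Proof.
  unfold VMM. simpl. split.
  - intros [v [Hv ->]]. apply HV in Hv. unfold pscale. destruct v; simpl. replace (1*r) with r by ring.
    replace (1*r0) with r0 by ring. auto.
  - intros Hx. exists x. split; [apply HV; auto|]. unfold pscale; destruct x; simpl; f_equal; ring.
Qed.

Lemma sig_RM b : in_RM L N nu 0 (sig b).
Proof.
  split; [|split].
  - destruct b.
    + exists g, PI. intros x. unfold sig, rho, rotation, rot, padd, psub. rewrite cos_PI, sin_PI.
      destruct x, g; simpl; f_equal; ring.
    + exists (0,0), 0. intros x. unfold sig, rotation, rot, padd, psub. rewrite cos_0, sin_0.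
      destruct x; simpl; f_equal; ring.
  - intros x Hx. apply VMM0. apply VMM0 in Hx. apply sig_in; auto.
  - intros y Hy. apply VMM0 in Hy. exists (sig b y). split.
    + apply VMM0. apply sig_in; auto.
    + destruct b; simpl; auto. apply rho_rho.
Qed.

Lemma psub_padd u T : psub (padd u T) T = u.
Proof. unfold psub, padd. destruct u, T; simpl; f_equal; ring. Qed.

Lemma good : good_labelling L N nu 4 0 lab.
Proof.
  split; [|split; [|split]].
  - intros x [w [Hw [u [Hu ->]]]]. apply VMM0 in Hu. rewrite lab_eq; auto.
    rewrite <- Hlen. apply idx_lt. apply sig_in; auto.
  - intros x y Hx Hy E. apply VMM0 in Hx. apply VMM0 in Hy. rewrite !lab_V0 in E; auto.
    apply (idx_inj x y l0); auto.
  - intros a Ha. exists (nth a l0 (0,0)). assert (Hin : In (nth a l0 (0,0)) l0) by (apply nth_In; lia).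
    split. apply VMM0; auto. rewrite lab_V0; auto. apply nth_idx; auto. lia.
  - intros w Hw. exists (sig (par (complex_shift L nu 0 w))). split.
    + apply sig_RM.
    + intros v [u [Hu ->]]. apply VMM0 in Hu. rewrite psub_padd. rewrite lab_eq; auto.
      rewrite lab_V0; auto. apply sig_in; auto.
Qed.

End Comb.

Theorem corollary3p16 (L : R) (N : nat) (nu : nat -> pt) (K : pt -> Prop) :
  simple_nested_fractal L N nu K ->
  set_card (V0 L N nu) 4 ->
  good_labelling_property L N nu.
Proof.
  intros Hsnf Hcard. pose proof Hsnf as [HL [HN [Hnu0 [Hatt [Hosc [Hnest [Hsym Hconn]]]]]]].
  destruct Hcard as [l0 [Hnd [Hlen Hiff]]].
  destruct (geom L N nu K l0 Hsnf Hnd Hlen Hiff) as [g [p [q [Hpq Hmem]]]].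
  exists 4%nat. split.
  - exists l0; auto.
  - exists 0%Z. eexists. eapply good; eauto.
Qed.
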